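(* Let $\Sigma$ be a finite alphabet, $S=s_0\cdots s_{m-1}\in\Sigma^m$, and $a,a'\in\Sigma^m$ with $\mathrm{rep}_{\mathrm{Sub}(S)}(a)=\mathrm{rep}_{\mathrm{Sub}(S)}(a')$. Then $f^S_{\mathrm{BMH}}(a)=f^S_{\mathrm{BMH}}(a')$ and $g^S_{\mathrm{BMH}}(a)=g^S_{\mathrm{BMH}}(a')$.
   Context: $\mathrm{Sub}(S)$ is the set of all substrings of $S$, including $\varepsilon$; $\mathrm{rep}_{\mathrm{Sub}(S)}(a)$ is the longest suffix of $a$ that is a substring of $S$. For a window $w=w_0\cdots w_{m-1}$: the Boyer–Moore–Horspool cost is $f^S_{\mathrm{BMH}}(w)=m$ if $w=S$ and otherwise $\min\{i\in\{1,\dots,m\}: w_{m-i}\ne s_{m-i}\}$. The BMH shift is $g^S_{\mathrm{BMH}}(w)=bc^S(w,1)$, where $bc^S(w,1)=m$ if $w_{m-1}\notin\{s_0,\dots,s_{m-2}\}$ and otherwise $\min\{k\in\{1,\dots,m-1\}: w_{m-1}=s_{m-1-k}\}$. *)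

(* Defs.v *)
From mathcomp Require Import all_boot.
Set Implicit Arguments. Unset Strict Implicit. Unset Printing Implicit Defensive.

Section BMH.
Variable T : finType.

Definition in_Sub (S u : seq T) : bool := infix u S.

(* rep_{Sub(S)}(a): the longest suffix of a that is a substring of S.
   Suffixes of a are drop k a (k = 0..size a); the longest one is the one
   with the least k (k = size a always works, giving the empty word). *)
Definition rep_Sub (S a : seq T) : seq T :=
  drop (find (fun k => in_Sub S (drop k a)) (iota 0 (size a).+1)) a.

(* w_i, as an option (indices used are always in range). *)
Definition at_ (w : seq T) (i : nat) : option T := onth w i.

Definition f_BMH (S w : seq T) : nat :=
  let m := size S in
  if w == S then m
  else (find (fun i => at_ w (m - i) != at_ S (m - i)) (iota 1 m)).+1.

Definition bc1 (S w : seq T) : nat :=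
  let m := size S in
  let c := at_ w (m - 1) in
  if c \notin [seq Some x | x <- take (m - 1) S] then m
  else (find (fun k => c == at_ S (m - 1 - k)) (iota 1 (m - 1))).+1.

Definition g_BMH (S w : seq T) : nat := bc1 S w.

End BMH.

(* Main.v *)
Require Import Defs.
From mathcomp Require Import all_boot.
From mathcomp Require Import zify.
Set Implicit Arguments. Unset Strict Implicit.

Lemma onth_drop (T : Type) (s : seq T) n i : onth (drop n s) i = onth s (n + i).
Proof. by rewrite !onthE map_drop nth_drop. Qed.

Lemma find_le_iota (P : pred nat) n N : n < N -> P n -> find P (iota 0 N) <= n.
Proof.
move=> hn hP; rewrite leqNgt; apply/negP => /(before_find 0).
by rewrite nth_iota // add0n hP.
Qed.

Definition kk (T : finType) (S a : seq T) :=
  find (fun k => in_Sub S (drop k a)) (iota 0 (size a).+1).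

Lemma kk_min (T : finType) (S a : seq T) n :
  n <= size a -> infix (drop n a) S -> kk S a <= n.
Proof. by move=> hn hi; apply: find_le_iota. Qed.

Lemma kk_le (T : finType) (S a : seq T) : kk S a <= size a.
Proof. by apply: kk_min => //; rewrite drop_size /=; case: S. Qed.

Lemma rep_kk (T : finType) (S a : seq T) : rep_Sub S a = drop (kk S a) a.
Proof. by []. Qed.

Definition Fr (T : finType) (S r : seq T) :=
  let j := size r in
  let P := (fun i => at_ r (j - i) != at_ S (size S - i)) in
  if has P (iota 1 j) then (find P (iota 1 j)).+1 else j.+1.

Lemma f_rep (T : finType) (S a : seq T) : size a = size S -> 0 < kk S a ->
  f_BMH S a = Fr S (rep_Sub S a).
Proof.
move=> hs hk; have hle := kk_le S a.
set k := kk S a in hk hle *.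
rewrite /f_BMH /Fr rep_kk size_drop.
have -> : (a == S) = false.
  apply/negbTE/eqP => eaS; move: hk; rewrite /k; subst a.
  by rewrite /kk /= drop0 /in_Sub infix_refl.
set m := size S; set j := size a - k.
have hj : j + k = m by rewrite /j /m; lia.
have eqP_ : {in iota 1 j, (fun i => at_ a (m - i) != at_ S (m - i)) =1
            (fun i => at_ (drop k a) (j - i) != at_ S (m - i))}.
  move=> i; rewrite mem_iota => /andP[h1 h2].
  by rewrite /at_ onth_drop; congr (onth _ _ != _); lia.
have -> : iota 1 m = iota 1 j ++ iota (1 + j) (m - j).
  by rewrite -iotaD; congr iota; lia.
rewrite find_cat (eq_in_has eqP_) (eq_in_find eqP_).
case: ifP => // hn.
have -> : m - j = (m - j - 1).+1 by lia.
rewrite /= size_iota.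
case: ifP => [_|hP]; first by rewrite addn0.
exfalso.
have hQ : infix (drop (k - 1) a) S.
  have -> : drop (k - 1) a = drop (k - 1) S.
    apply: eq_from_onth => t; rewrite !onth_drop.
    have [ht|ht] := leqP t j.
      case: t ht => [|t] ht.
        move/negbT: hP; rewrite negbK => /eqP.
        by rewrite /at_; have -> : m - (1 + j) = k - 1 + 0 by lia.
      move/negbT/hasPn: hn => /(_ (j - t)).
      rewrite mem_iota => /(_ ltac:(lia)); rewrite negbK => /eqP.
      rewrite /at_ onth_drop.
      have -> : k + (j - (j - t)) = k - 1 + t.+1 by lia.
      by have -> : m - (j - t) = k - 1 + t.+1 by lia.
    by rewrite !onth_default //; rewrite -/m; lia.
  exact: infix_drop.
have := kk_min (n := k - 1) _ hQ; rewrite -/k; lia.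
Qed.

Lemma g_rep (T : finType) (S a : seq T) : size a = size S -> 0 < kk S a ->
  (size (rep_Sub S a) = 0 -> g_BMH S a = size S) /\
  (0 < size (rep_Sub S a) ->
     at_ a (size S - 1) = at_ (rep_Sub S a) (size (rep_Sub S a) - 1)).
Proof.
move=> hs hk; have hle := kk_le S a.
rewrite rep_kk size_drop; set k := kk S a in hk hle *.
split => hj.
  rewrite /g_BMH /bc1.
  case E: (at_ a (size S - 1)) => [x|]; last first.
    by rewrite ifT //; apply/mapP => -[y _].
  rewrite ifT //; apply/negP => /mapP [y hy [eyx]]; subst y.
  have hx : infix [:: x] S by rewrite infix1s; exact: mem_take hy.
  have : drop (size S - 1) a = [:: x].
    apply: eq_from_onth => t; rewrite onth_drop.
    case: t => [|t]; first by rewrite addn0 -[RHS]E.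
    by rewrite onth_default /=; [case: t|lia].
  move=> ed; rewrite -ed in hx.
  have := kk_min (n := size S - 1) _ hx; rewrite -/k; lia.
by rewrite /at_ onth_drop; congr onth; lia.
Qed.

Theorem lemma18 (T : finType) (m : nat) (S a a' : seq T) :
  size S = m -> size a = m -> size a' = m ->
  rep_Sub S a = rep_Sub S a' ->
  f_BMH S a = f_BMH S a' /\ g_BMH S a = g_BMH S a'.
Proof.
move=> hS ha ha' er.
have sr : size (drop (kk S a) a) = size (drop (kk S a') a') by rewrite -!rep_kk er.
rewrite !size_drop ha ha' in sr.
have hk := kk_le S a; have hk' := kk_le S a'; rewrite ha in hk; rewrite ha' in hk'.
case: (posnP (kk S a)) => k0.
  have k0' : kk S a' = 0 by lia.
  have : a = a' by move: er; rewrite !rep_kk k0 k0' !drop0.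
  by move=> ->.
have k0' : 0 < kk S a' by lia.
have hsa : size a = size S by lia.
have hsa' : size a' = size S by lia.
split; first by rewrite !f_rep // er.
have [g1 g2] := g_rep hsa k0; have [g1' g2'] := g_rep hsa' k0'.
case: (posnP (size (rep_Sub S a))) => hj.
  by rewrite g1 // g1' // -er.
by rewrite /g_BMH /bc1 g2 // g2' -er.
Qed.
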